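(* Let $\lambda\in\mathbb{C}$, let $C$ be a path, and let $f$ be a function such that all Jackson integrals below converge and all boundary values below exist. Write $K_\lambda(t,x)=\dfrac{(q^{1-\lambda}t/x)_\infty}{(qt/x)_\infty}$. Then $$E_{\lambda;C}[T f](x)=q^{-\lambda-1}\,T_x E_{\lambda;C}[f](x)-x^\lambda\,\frac{1-q}{q}\left[t\,\frac{1-q^{-\lambda}t/x}{1-t/x}\,f(t)\,K_\lambda(t,x)\right]_{t\in\partial C},$$ $$E_{\lambda;C}[D f](x)=q^{-\lambda}\,D_x E_{\lambda;C}[f](x)+x^\lambda\left[\frac{1-q^{-\lambda}t/x}{1-t/x}\,f(t)\,K_\lambda(t,x)\right]_{t\in\partial C},$$ where $Tf$ denotes the function $t\mapsto f(qt)$ and $Df$ denotes the function $t\mapsto \frac{f(t)-f(qt)}{(1-q)t}$.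
   Context: Fix $q\in\mathbb{C}$ with $0<|q|<1$. For a function $f$ of $x$: $T_xf(x)=f(qx)$, $D_xf(x)=\frac{f(x)-f(qx)}{(1-q)x}$. $(a)_\infty=\prod_{k\ge0}(1-aq^k)$. $x^\lambda$ denotes a fixed branch with $T_x x^\lambda=q^\lambda x^\lambda$. Jackson integrals: $\int_0^\tau f(t)d_qt=(1-q)\sum_{n\ge0}f(\tau q^n)\tau q^n$ for $\tau\in\mathbb{C}$; $\int_0^{\tau\infty}f(t)d_qt=(1-q)\sum_{n\in\mathbb{Z}}f(\tau q^n)\tau q^n$; for $\tau_1,\tau_2\in\mathbb{C}\cup\mathbb{C}\infty$, $\int_{[\tau_1,\tau_2]}=\int_{[0,\tau_2]}-\int_{[0,\tau_1]}$. A path is a formal linear combination $C=\sum a_iC_i$ of such intervals, with $\int_C=\sum a_i\int_{C_i}$. Boundary values: $[F(t)]_{t\in\partial[\tau_1,\tau_2]}=F(\tau_2)-F(\tau_1)$, extended linearly to paths, where $F(\tau\infty)=\lim_{n\to-\infty}F(\tau q^n)$ and $F(0)$ means $\lim_{n\to+\infty}F(\tau q^n)$. The $q$-Euler type integral transformation is $E_{\lambda;C}[f](x)=x^\lambda\int_C f(t)\,\frac{(q^{1-\lambda}t/x)_\infty}{(qt/x)_\infty}\,d_qt$. *)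

(* Defs.v *)
From Stdlib Require Import Reals ZArith List ClassicalEpsilon.
From Coquelicot Require Import Coquelicot.
Import ListNotations.
Open Scope C_scope.

Fixpoint cpow (z : C) (n : nat) : C :=
  match n with O => RtoC 1 | S m => z * cpow z m end.

Definition cpowZ (z : C) (n : Z) : C :=
  match n with
  | Z0 => RtoC 1
  | Zpos p => cpow z (Pos.to_nat p)
  | Zneg p => cpow (/ z) (Pos.to_nat p)
  end.

Definition cconv (u : nat -> C) (l : C) : Prop :=
  filterlim u eventually (locally l).
Definition has_limC (u : nat -> C) : Prop := exists l, cconv u l.
Definition limC (u : nat -> C) : C := epsilon (inhabits (RtoC 0)) (fun l => cconv u l).

(** Partial sums / products: psum a n = a 0 + ... + a (n-1). *)
Fixpoint psum (a : nat -> C) (n : nat) : C :=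
  match n with O => RtoC 0 | S m => psum a m + a m end.
Fixpoint pprod (a : nat -> C) (n : nat) : C :=
  match n with O => RtoC 1 | S m => pprod a m * a m end.

Definition series_conv (a : nat -> C) : Prop := has_limC (psum a).
Definition seriesC (a : nat -> C) : C := limC (psum a).

Definition qpoch (q a : C) : C :=
  limC (pprod (fun k => RtoC 1 - a * cpow q k)).

Definition qT (q : C) (f : C -> C) : C -> C := fun t => f (q * t).
Definition qD (q : C) (f : C -> C) : C -> C :=
  fun t => (f t - f (q * t)) / ((RtoC 1 - q) * t).

(** Jackson integrals.  An endpoint is either a finite tau, or tau*oo. *)
Inductive endpt : Type :=
  | Fin (tau : C)
  | Infty (tau : C).

Definition jterm (q : C) (f : C -> C) (tau : C) (n : Z) : C :=
  f (tau * cpowZ q n) * (tau * cpowZ q n).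

Definition jack0_conv q f tau : Prop :=
  series_conv (fun n => jterm q f tau (Z.of_nat n)).
Definition jack0 q f tau : C :=
  (RtoC 1 - q) * seriesC (fun n => jterm q f tau (Z.of_nat n)).

(* int_0^{tau oo} f d_qt = (1-q) sum_{n in Z} f(tau q^n) tau q^n,
   the bilateral sum converging meaning both halves converge *)
Definition jackInf_conv q f tau : Prop :=
  series_conv (fun n => jterm q f tau (Z.of_nat n)) /\
  series_conv (fun n => jterm q f tau (- Z.of_nat (S n))).
Definition jackInf q f tau : C :=
  (RtoC 1 - q) * (seriesC (fun n => jterm q f tau (Z.of_nat n))
                  + seriesC (fun n => jterm q f tau (- Z.of_nat (S n)))).

Definition jack_ep q f (e : endpt) : C :=
  match e with Fin tau => jack0 q f tau | Infty tau => jackInf q f tau end.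
Definition jack_ep_conv q f (e : endpt) : Prop :=
  match e with Fin tau => jack0_conv q f tau | Infty tau => jackInf_conv q f tau end.

(** A path: formal linear combination sum a_i [tau1_i, tau2_i]. *)
Definition path : Type := list (C * (endpt * endpt)).

(* int_{[t1,t2]} = int_{[0,t2]} - int_{[0,t1]}, extended linearly *)
Definition jint q f (P : path) : C :=
  List.fold_right (fun c acc =>
    fst c * (jack_ep q f (snd (snd c)) - jack_ep q f (fst (snd c))) + acc)
    (RtoC 0) P.
Definition jint_conv q f (P : path) : Prop :=
  List.Forall (fun c => jack_ep_conv q f (fst (snd c)) /\ jack_ep_conv q f (snd (snd c))) P.

(** F(0) := lim_{n->+oo} F(tau q^n) on the lattice of the
    endpoint tau; F(tau oo) := lim_{n->-oo} F(tau q^n).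
    [F]_{d[0,tau]} = F(tau) - F(0),  [F]_{d[0,tau oo]} = F(tau oo) - F(0),
    [F]_{d[t1,t2]} = [F]_{d[0,t2]} - [F]_{d[0,t1]}, extended linearly. *)
Definition at0_seq q (F : C -> C) tau : nat -> C := fun n => F (tau * cpow q n).
Definition atInf_seq q (F : C -> C) tau : nat -> C := fun n => F (tau * cpowZ q (- Z.of_nat n)).

Definition bd_ep q F (e : endpt) : C :=
  match e with
  | Fin tau => F tau - limC (at0_seq q F tau)
  | Infty tau => limC (atInf_seq q F tau) - limC (at0_seq q F tau)
  end.
Definition bd_ep_ex q F (e : endpt) : Prop :=
  match e with
  | Fin tau => has_limC (at0_seq q F tau)
  | Infty tau => has_limC (atInf_seq q F tau) /\ has_limC (at0_seq q F tau)
  end.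

Definition bdry q F (P : path) : C :=
  List.fold_right (fun c acc =>
    fst c * (bd_ep q F (snd (snd c)) - bd_ep q F (fst (snd c))) + acc)
    (RtoC 0) P.
Definition bdry_ex q F (P : path) : Prop :=
  List.Forall (fun c => bd_ep_ex q F (fst (snd c)) /\ bd_ep_ex q F (snd (snd c))) P.

(** The point x is not on the q-lattice of any endpoint of the path
    (so that no factor of the kernels / denominators below vanishes). *)
Definition ep_avoids q (e : endpt) (x : C) : Prop :=
  match e with
  | Fin tau => forall n : nat, tau * cpow q n <> x
  | Infty tau => forall n : Z, tau * cpowZ q n <> x
  end.
Definition path_avoids q (P : path) (x : C) : Prop :=
  List.Forall (fun c => ep_avoids q (fst (snd c)) x /\ ep_avoids q (snd (snd c)) x) P.

(** Kernel K_lambda(t,x) = (q^{1-lambda} t/x)_oo / (q t/x)_oo, where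
    ql stands for q^lambda (so q^{1-lambda} = q / ql). *)
Definition Kern (q ql t x : C) : C :=
  qpoch q (q / ql * t / x) / qpoch q (q * t / x).

(** q-Euler transform E_{lambda;C}[f](x) = x^lambda int_C f(t) K(t,x) d_qt,
    xl being the chosen branch of x^lambda. *)
Definition Eul (q ql : C) (xl : C -> C) (P : path) (f : C -> C) (x : C) : C :=
  xl x * jint q (fun t => f t * Kern q ql t x) P.

Definition ratio (q ql t x : C) : C :=
  (RtoC 1 - / ql * t / x) / (RtoC 1 - t / x).

(* Main.v *)
Require Import Defs.
From Stdlib Require Import Reals ZArith List.
From Coquelicot Require Import Coquelicot.
Open Scope C_scope.
From Stdlib Require Import Lra Lia ClassicalEpsilon.
Lemma cconv_unique u l m : cconv u l -> cconv u m -> l = m.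
Proof. intros H1 H2. exact (filterlim_locally_unique (F:=eventually) u l m H1 H2). Qed.

Lemma limC_eq u l : cconv u l -> limC u = l.
Proof.
  intros H. unfold limC.
  apply (cconv_unique u). 2: exact H.
  apply (epsilon_spec (inhabits (RtoC 0)) (fun l => cconv u l)). exists l; exact H.
Qed.

Lemma cconv_plus u v l m : cconv u l -> cconv v m -> cconv (fun n => u n + v n) (l + m).
Proof.
  intros H1 H2. unfold cconv.
  apply (filterlim_comp_2 (F:=eventually) u v (fun a b => @plus C_NormedModule a b) H1 H2).
  apply (@filterlim_plus C_AbsRing C_NormedModule).
Qed.

Lemma cconv_scal c u l : cconv u l -> cconv (fun n => c * u n) (c * l).
Proof.
  intros H. unfold cconv.
  apply (filterlim_comp _ _ _ u (fun z => @scal C_AbsRing C_NormedModule c z) _ _ _ H).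
  apply (@filterlim_scal_r C_AbsRing C_NormedModule).
Qed.

Lemma cconv_const c : cconv (fun _ => c) c.
Proof. apply filterlim_const. Qed.

Lemma cconv_ext u v l : (forall n, u n = v n) -> cconv u l -> cconv v l.
Proof. intros E H. unfold cconv. apply (filterlim_ext u v); auto. Qed.

Lemma cconv_S u l : cconv (fun n => u (S n)) l -> cconv u l.
Proof.
  intros H P HP. specialize (H P HP). destruct H as [N HN].
  exists (S N). intros n Hn. destruct n as [|n]; [lia|]. apply HN. lia.
Qed.

Lemma cconv_Sinv u l : cconv u l -> cconv (fun n => u (S n)) l.
Proof.
  intros H P HP. specialize (H P HP). destruct H as [N HN].
  exists N. intros n Hn. apply HN. lia.
Qed.

Lemma Cmod_cpow q n : Cmod (cpow q n) = (Cmod q ^ n)%R.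
Proof. induction n; simpl. apply Cmod_1. rewrite Cmod_mult, IHn. reflexivity. Qed.

Lemma exp_mono x y : (x <= y)%R -> (exp x <= exp y)%R.
Proof. intros H. destruct (Rle_lt_or_eq_dec _ _ H) as [h|h]. left; apply exp_increasing; auto. subst; lra. Qed.

Lemma pprod_bound (q a : C) : (Cmod q < 1)%R ->
  forall n, (Cmod (pprod (fun k => (1 - a * cpow q k)%C) n) <= exp (Cmod a * (1 - Cmod q ^ n) / (1 - Cmod q)))%R.
Proof.
  intros Hq. assert (H0 := Cmod_ge_0 q). assert (Ha := Cmod_ge_0 a).
  induction n; simpl.
  - rewrite Cmod_1. replace (Cmod a * (1 - 1) / (1 - Cmod q))%R with 0%R by (field; lra).
    rewrite exp_0; lra.
  - rewrite Cmod_mult.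
    assert (Hb : (Cmod (1 - a * cpow q n) <= 1 + Cmod a * Cmod q ^ n)%R).
    { unfold Cminus. eapply Rle_trans. apply Cmod_triangle. rewrite Cmod_opp, Cmod_mult, Cmod_cpow, Cmod_1. lra. }
    assert (Hp : (0 <= Cmod q ^ n)%R) by (apply pow_le; auto).
    eapply Rle_trans. apply Rmult_le_compat; try apply Cmod_ge_0. exact IHn. exact Hb.
    eapply Rle_trans. apply Rmult_le_compat_l. left; apply exp_pos. apply exp_ineq1_le.
    rewrite <- exp_plus. apply exp_mono. right. field. lra.
Qed.

Lemma psum_sum_n (d : nat -> C) n : psum d (S n) = sum_n d n.
Proof.
  induction n. simpl. rewrite sum_O. apply Cplus_0_l.
  rewrite sum_Sn. change (psum d (S n) + d (S n) = Cplus (sum_n d n) (d (S n))).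
  rewrite IHn. reflexivity.
Qed.

Lemma psum_conv_le (d : nat -> C) (b : nat -> R) :
  (forall n, (Cmod (d n) <= b n)%R) -> ex_series b -> has_limC (psum d).
Proof.
  intros Hb Hs. destruct (@ex_series_le C_AbsRing C_CompleteNormedModule d b Hb Hs) as [l Hl].
  exists l. apply cconv_S. apply (cconv_ext (sum_n d)). intros; symmetry; apply psum_sum_n. exact Hl.
Qed.

Lemma pprod_conv (q a : C) : (Cmod q < 1)%R -> has_limC (pprod (fun k => 1 - a * cpow q k)).
Proof.
  intros Hq. set (P := pprod (fun k => 1 - a * cpow q k)).
  set (M := exp (Cmod a / (1 - Cmod q))).
  assert (H0 := Cmod_ge_0 q). assert (Ha := Cmod_ge_0 a).
  assert (HM : forall n, (Cmod (P n) <= M)%R).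
  { intros n. eapply Rle_trans. apply pprod_bound; auto. apply exp_mono.
    unfold Rdiv. apply Rmult_le_compat_r. left; apply Rinv_0_lt_compat; lra.
    assert (0 <= Cmod q ^ n)%R by (apply pow_le; auto). nra. }
  set (d := fun n => P (S n) - P n).
  assert (Hd : has_limC (psum d)).
  { apply (psum_conv_le d (fun n => M * Cmod a * Cmod q ^ n)%R).
    - intros n. unfold d. unfold P at 1. simpl. fold P.
      replace (P n * (1 - a * cpow q n) - P n) with (P n * (- (a * cpow q n))) by ring.
      rewrite Cmod_mult, Cmod_opp, Cmod_mult, Cmod_cpow.
      assert (0 <= Cmod q ^ n)%R by (apply pow_le; auto).
      rewrite <- Rmult_assoc. apply Rmult_le_compat_r; auto. apply Rmult_le_compat_r; auto.
    - apply (@ex_series_scal R_AbsRing R_NormedModule (M * Cmod a)%R (fun n => Cmod q ^ n)%R).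
      apply ex_series_geom. rewrite Rabs_pos_eq; auto. }
  destruct Hd as [l Hl]. exists (l + 1).
  apply (cconv_ext (fun n => psum d n + 1)).
  - intros n. induction n. simpl. unfold P; simpl. ring.
    change (psum d n + d n + 1 = P (S n)). replace (d n) with (P (S n) - P n) by reflexivity. rewrite <- IHn. ring.
  - apply cconv_plus; auto. apply cconv_const.
Qed.

Lemma qpoch_step (q b : C) : (Cmod q < 1)%R -> qpoch q b = (1 - b) * qpoch q (q * b).
Proof.
  intros Hq. destruct (pprod_conv q (q * b) Hq) as [L HL].
  unfold qpoch. rewrite (limC_eq _ L HL).
  apply limC_eq. apply cconv_S.
  apply (cconv_ext (fun n => (1 - b) * pprod (fun k => 1 - q * b * cpow q k) n)).
  - induction n. simpl. ring. simpl in *. rewrite <- IHn. ring.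
  - apply cconv_scal; auto.
Qed.

Lemma Cinv_0' : / (RtoC 0) = 0.
Proof. unfold Cinv; simpl. apply injective_projections; simpl; unfold Rdiv; ring. Qed.

Lemma Cinv_mult2 (u v : C) : u <> 0 -> / (u * v) = / u * / v.
Proof.
  intros Hu. destruct (Ceq_dec v 0) as [->|Hv].
  - rewrite Cmult_0_r, Cinv_0', Cmult_0_r. reflexivity.
  - field. split; auto.
Qed.

Lemma K1 (q ql t x : C) : q <> 0 -> x <> 0 -> ql <> 0 -> Kern q ql (q * t) (q * x) = Kern q ql t x.
Proof.
  intros Hq Hx Hl. unfold Kern.
  replace (q / ql * (q * t) / (q * x)) with (q / ql * t / x) by (field; repeat split; auto).
  replace (q * (q * t) / (q * x)) with (q * t / x) by (field; repeat split; auto). reflexivity.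
Qed.

Lemma one_minus_nz (t x : C) : x <> 0 -> t <> x -> 1 - t / x <> 0.
Proof.
  intros Hx Ht H. apply Ht.
  assert (E : t / x = 1). { rewrite <- (Cplus_0_l (t/x)). rewrite <- H. ring. }
  replace t with (t / x * x) by (field; repeat split; auto). rewrite E. ring.
Qed.

Lemma K2 (q ql t x : C) : (Cmod q < 1)%R -> q <> 0 -> x <> 0 -> ql <> 0 -> t <> x ->
  Kern q ql t (q * x) = ratio q ql t x * Kern q ql t x.
Proof.
  intros Hq1 Hq Hx Hl Ht. unfold Kern, ratio.
  rewrite (qpoch_step q (q / ql * t / (q * x))), (qpoch_step q (q * t / (q * x))) by auto.
  replace (q * (q / ql * t / (q * x))) with (q / ql * t / x) by (field; repeat split; auto).
  replace (q * (q * t / (q * x))) with (q * t / x) by (field; repeat split; auto).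
  replace (q / ql * t / (q * x)) with (/ ql * t / x) by (field; repeat split; auto).
  replace (q * t / (q * x)) with (t / x) by (field; repeat split; auto).
  unfold Cdiv at 1 4. rewrite Cinv_mult2 by (apply one_minus_nz; auto).
  unfold Cdiv. ring.
Qed.

Lemma cpowZ_nat (q : C) n : cpowZ q (Z.of_nat n) = cpow q n.
Proof. destruct n; simpl; auto. rewrite SuccNat2Pos.id_succ. reflexivity. Qed.

Lemma cpowZ_neg (q : C) n : cpowZ q (- Z.of_nat n) = cpow (/ q) n.
Proof. destruct n; simpl; auto. rewrite SuccNat2Pos.id_succ. reflexivity. Qed.

Lemma psum_tele (a b phi c : nat -> C) (al be ga : C) :
  (forall n, c n = al * a n + be * b n + ga * (phi n - phi (S n))) ->
  forall N, psum c N = al * psum a N + be * psum b N + ga * (phi O - phi N).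
Proof. intros H N. induction N; simpl. ring. rewrite IHN, H. ring. Qed.

Lemma tele (a b phi c : nat -> C) (al be ga SA SB l : C) :
  cconv (psum a) SA -> cconv (psum b) SB -> cconv phi l ->
  (forall n, c n = al * a n + be * b n + ga * (phi n - phi (S n))) ->
  cconv (psum c) (al * SA + be * SB + ga * (phi O - l)).
Proof.
  intros HA HB Hp H.
  apply (cconv_ext (fun N => al * psum a N + be * psum b N + (ga * phi O + (- ga) * phi N))).
  { intros N. rewrite (psum_tele a b phi c al be ga H). ring. }
  replace (al * SA + be * SB + ga * (phi O - l)) with (al * SA + be * SB + (ga * phi O + (- ga) * l)) by ring.
  apply cconv_plus. apply cconv_plus; apply cconv_scal; auto.
  apply cconv_plus. apply cconv_const. apply cconv_scal; auto.
Qed.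

Lemma seriesC_eq (a : nat -> C) l : cconv (psum a) l -> seriesC a = l.
Proof. apply limC_eq. Qed.

Section JL.
Variables (q x : C) (L A B Phi : C -> C) (al be ga : C).
Hypothesis Hq : q <> 0.
Hypothesis Hpt : forall p, p <> x -> q * p <> x ->
  L p * p = al * (A p * p) + be * (B p * p) + ga * (Phi p - Phi (q * p)).

Lemma pos_half tau SA SB l :
  (forall n : nat, tau * cpow q n <> x) ->
  cconv (psum (fun n => jterm q A tau (Z.of_nat n))) SA ->
  cconv (psum (fun n => jterm q B tau (Z.of_nat n))) SB ->
  cconv (at0_seq q Phi tau) l ->
  seriesC (fun n => jterm q L tau (Z.of_nat n)) = al * SA + be * SB + ga * (Phi tau - l).
Proof.
  intros Hav HA HB Hl. apply seriesC_eq.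
  replace (Phi tau) with (at0_seq q Phi tau O) by (unfold at0_seq; simpl; rewrite Cmult_1_r; auto).
  apply (tele _ _ _ _ al be ga SA SB l HA HB Hl).
  intros n. unfold jterm, at0_seq. rewrite !cpowZ_nat. simpl.
  replace (tau * (q * cpow q n)) with (q * (tau * cpow q n)) by ring.
  apply Hpt. apply Hav. replace (q * (tau * cpow q n)) with (tau * cpow q (S n)) by (simpl; ring). apply Hav.
Qed.

Lemma neg_half tau SA SB l :
  (forall n : nat, tau * cpow (/ q) n <> x) ->
  cconv (psum (fun n => jterm q A tau (- Z.of_nat (S n)))) SA ->
  cconv (psum (fun n => jterm q B tau (- Z.of_nat (S n)))) SB ->
  cconv (atInf_seq q Phi tau) l ->
  seriesC (fun n => jterm q L tau (- Z.of_nat (S n))) = al * SA + be * SB + ga * (l - Phi tau).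
Proof.
  intros Hav HA HB Hl. apply seriesC_eq.
  set (psi := fun n => Phi (tau * cpow (/ q) n)).
  assert (Hl' : cconv psi l).
  { apply (cconv_ext (atInf_seq q Phi tau)); auto. intros n; unfold atInf_seq, psi. rewrite cpowZ_neg. auto. }
  replace (al * SA + be * SB + ga * (l - Phi tau)) with (al * SA + be * SB + (- ga) * (psi O - l))
    by (unfold psi; simpl; rewrite Cmult_1_r; ring).
  apply (tele _ _ _ _ al be (- ga) SA SB l HA HB Hl').
  intros n. unfold jterm, psi. rewrite !cpowZ_neg.
  assert (E : q * (tau * cpow (/ q) (S n)) = tau * cpow (/ q) n).
  { simpl. replace (q * (tau * (/ q * cpow (/ q) n))) with ((q * / q) * (tau * cpow (/ q) n)) by ring.
    rewrite Cinv_r; auto. ring. }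
  rewrite Hpt. rewrite E. ring. apply Hav. rewrite E. apply Hav.
Qed.

Lemma jack_lin e : ep_avoids q e x -> jack_ep_conv q A e -> jack_ep_conv q B e -> bd_ep_ex q Phi e ->
  jack_ep q L e = al * jack_ep q A e + be * jack_ep q B e + ga * (1 - q) * bd_ep q Phi e.
Proof.
  destruct e as [tau|tau]; simpl; intros Hav HA HB Hb.
  - destruct HA as [SA HA]. destruct HB as [SB HB]. destruct Hb as [l Hl].
    unfold jack0. rewrite (pos_half tau SA SB l); auto.
    rewrite (seriesC_eq _ _ HA), (seriesC_eq _ _ HB), (limC_eq _ _ Hl). ring.
  - destruct HA as [[SA HA] [SA' HA']]. destruct HB as [[SB HB] [SB' HB']].
    destruct Hb as [[l' Hl'] [l Hl]].
    assert (Hv : forall n : nat, tau * cpow q n <> x) by (intros n; rewrite <- cpowZ_nat; apply Hav).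
    assert (Hv' : forall n : nat, tau * cpow (/ q) n <> x) by (intros n; rewrite <- cpowZ_neg; apply Hav).
    unfold jackInf. rewrite (pos_half tau SA SB l), (neg_half tau SA' SB' l'); auto.
    rewrite (seriesC_eq _ _ HA), (seriesC_eq _ _ HB), (limC_eq _ _ Hl),
      (seriesC_eq _ _ HA'), (seriesC_eq _ _ HB'), (limC_eq _ _ Hl'). ring.
Qed.

Lemma jint_lin P : path_avoids q P x -> jint_conv q A P -> jint_conv q B P -> bdry_ex q Phi P ->
  jint q L P = al * jint q A P + be * jint q B P + ga * (1 - q) * bdry q Phi P.
Proof.
  induction P as [|c P IH]; simpl; intros Hav HA HB Hb.
  - ring.
  - inversion Hav as [|? ? [H1 H2] Hav']; subst.
    inversion HA as [|? ? [A1 A2] HA']; subst.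
    inversion HB as [|? ? [B1 B2] HB']; subst.
    inversion Hb as [|? ? [P1 P2] Hb']; subst.
    rewrite IH by auto. rewrite !jack_lin by auto. ring.
Qed.
End JL.
Lemma q_nz (q : C) : (0 < Cmod q)%R -> q <> 0.
Proof. intros H E. rewrite E, Cmod_0 in H. lra. Qed.

Lemma one_q_nz (q : C) : (Cmod q < 1)%R -> 1 - q <> 0.
Proof. intros H E. assert (q = 1). { rewrite <- (Cplus_0_l q), <- E. ring. } subst. rewrite Cmod_1 in H. lra. Qed.

Lemma sub_nz (a b : C) : b <> a -> a - b <> 0.
Proof. intros H E. apply H. rewrite <- (Cplus_0_l b), <- E. ring. Qed.

Theorem mainTheorem1 (q ql : C) (xl : C -> C) (P : path) (f : C -> C) (x : C) :
  0 < Cmod q < 1 ->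
  ql <> RtoC 0 ->
  (forall y : C, xl (q * y) = ql * xl y) ->
  x <> RtoC 0 ->
  path_avoids q P x ->
  jint_conv q (fun t => f t * Kern q ql t x) P ->
  jint_conv q (fun t => f t * Kern q ql t (q * x)) P ->
  jint_conv q (fun t => qT q f t * Kern q ql t x) P ->
  jint_conv q (fun t => qD q f t * Kern q ql t x) P ->
  bdry_ex q (fun t => t * ratio q ql t x * f t * Kern q ql t x) P ->
  bdry_ex q (fun t => ratio q ql t x * f t * Kern q ql t x) P ->
  Eul q ql xl P (qT q f) x
    = / (ql * q) * Eul q ql xl P f (q * x)
      - xl x * ((RtoC 1 - q) / q)
          * bdry q (fun t => t * ratio q ql t x * f t * Kern q ql t x) P
  /\
  Eul q ql xl P (qD q f) x
    = / ql * ((Eul q ql xl P f x - Eul q ql xl P f (q * x)) / ((RtoC 1 - q) * x))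
      + xl x * bdry q (fun t => ratio q ql t x * f t * Kern q ql t x) P.
Proof.
  intros [Hq0 Hq1] Hl Hxl Hx Hav C1 C2 C3 C4 B1 B2.
  assert (Hq : q <> 0) by (apply q_nz; auto).
  assert (H1q : 1 - q <> 0) by (apply one_q_nz; auto).
  assert (Ek : forall p, p <> x -> q * p <> x ->
            Kern q ql p x = ratio q ql (q * p) x * Kern q ql (q * p) x).
  { intros p H1 H2. rewrite <- (K1 q ql p x) by auto. apply K2; auto. }
  split.
  - unfold Eul. rewrite Hxl.
    rewrite (jint_lin q x (fun t => qT q f t * Kern q ql t x)
              (fun t => f t * Kern q ql t (q * x)) (fun t => f t * Kern q ql t (q * x))
              (fun t => t * ratio q ql t x * f t * Kern q ql t x) (/ q) 0 (- / q) Hq); auto.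
    + field; repeat split; auto; try exact H1q; try (apply sub_nz; auto).
    + intros p H1 H2. unfold qT. rewrite (K2 q ql p x) by auto. rewrite (Ek p) by auto.
      field; repeat split; auto; try exact H1q; try (apply sub_nz; auto).
  - unfold Eul. rewrite Hxl.
    rewrite (jint_lin q x (fun t => qD q f t * Kern q ql t x)
              (fun t => f t * Kern q ql t x) (fun t => f t * Kern q ql t (q * x))
              (fun t => ratio q ql t x * f t * Kern q ql t x)
              (/ ql * / ((1 - q) * x)) (- / ((1 - q) * x)) (/ (1 - q)) Hq); auto.
    + field; repeat split; auto; try exact H1q; try (apply sub_nz; auto).
    + intros p H1 H2. destruct (Ceq_dec p 0) as [->|Hp].
      * rewrite !Cmult_0_r. ring.
      * rewrite (K2 q ql p x) by auto. rewrite (Ek p) by auto.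
        unfold qD, ratio. field; repeat split; auto; try exact H1q; try (apply sub_nz; auto).
Qed.
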